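(* Let $p\ge 1$, $m=2p$, $j=\mathrm{diag}(I_p,-I_p)$. Fix a function $\theta$ assigning to each $m\times m$ matrix $R$ with $R=R^*>0$, $RjR=j$ a nonzero complex number $\theta(R)$. (i) Let $\{R_k\}_{k\ge0}$ be $m\times m$ matrices with $R_k=R_k^*>0$ and $R_kjR_k=j$, put $\theta_k=\theta(R_k)$, $U_0=I_m$, $U_k=(ijR_0)(ijR_1)\cdots(ijR_{k-1})$ for $k>0$, and $C_k=(U_k^* )^{-1}R_k^2U_k^{-1}$. Then $C_k>0$, $C_k=C_k^*$ and $C_kjC_k=j$ for all $k$, and whenever $X_k(z)$ solves the block Szeg\''o recurrence $X_{k+1}(z)=\theta_kR_k\,\mathrm{diag}(zI_p,I_p)X_k(z)$, the function $$W_k(\lambda)=\frac{(i-\lambda^{-1})^k}{\prod_{r=0}^{k-1}\theta_r}\,U_k\,\mathrm{diag}(zI_p,I_p)\,X_k(z),\qquad z=\frac{1+i\lambda}{1-i\lambda},$$ solves the discrete Dirac system $W_{k+1}(\lambda)-W_k(\lambda)=-\frac{i}{\lambda}jC_kW_k(\lambda)$. (ii) Conversely, let $\{C_k\}_{k\ge0}$ be $m\times m$ matrices with $C_k>0$, $C_k=C_k^*$, $C_kjC_k=j$. Define recursively $U_0=I_m$, $R_k=(U_k^*C_kU_k)^{1/2}$ (positive square root), $U_{k+1}=U_k(ijR_k)$. Then $R_k=R_k^*>0$, $R_kjR_k=j$ and $C_k=(U_k^* )^{-1}R_k^2U_k^{-1}$ for all $k$. Consequently the maps in (i) and (ii) are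 mutually inverse, giving a one-to-one correspondence between such Dirac type systems (with $C_k>0$) and block Szeg\''o recurrences with $R_k>0$, $\theta_k=\theta(R_k)$.
   Context: $I_p$ denotes the $p\times p$ identity matrix. For a positive definite matrix, $(\cdot)^{1/2}$ is its positive definite square root. *)

(* Defs.v *)
(* complex scalars are an arbitrary numClosedFieldType C
   (e.g. C = R[i]); matrices are 'M[C]_(p + p). *)
From Stdlib Require Import ClassicalEpsilon.
From HB Require Import structures.
From mathcomp Require Import all_boot all_order all_algebra.
Set Implicit Arguments. Unset Strict Implicit. Unset Printing Implicit Defensive.
Import Order.TTheory GRing.Theory Num.Theory Num.Def.
Import Num.Syntax.
Local Open Scope ring_scope.

Section Defs.
Variable C : numClosedFieldType.

Definition adjmx (m n : nat) (A : 'M[C]_(m, n)) : 'M[C]_(n, m) :=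
  (map_mx conjC A)^T.

Definition posdef (n : nat) (A : 'M[C]_n) : Prop :=
  A = adjmx A /\ forall v : 'rV[C]_n, v != 0 -> 0 < (v *m A *m adjmx v) 0 0.

Definition sqrtpd (n : nat) (A : 'M[C]_n) : 'M[C]_n :=
  epsilon (inhabits 0) (fun S : 'M[C]_n => posdef S /\ S *m S = A).

Definition jmx (p : nat) : 'M[C]_(p + p) := block_mx 1%:M 0 0 (- 1%:M).

Definition diagz (p : nat) (z : C) : 'M[C]_(p + p) := block_mx (z%:M) 0 0 1%:M.

Fixpoint Useq (p : nat) (R : nat -> 'M[C]_(p + p)) (k : nat) : 'M[C]_(p + p) :=
  match k with
  | 0 => 1%:M
  | k'.+1 => Useq R k' *m ('i *: jmx p *m R k')
  end.

Definition Cseq (p : nat) (R : nat -> 'M[C]_(p + p)) (k : nat) : 'M[C]_(p + p) :=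
  invmx (adjmx (Useq R k)) *m (R k *m R k) *m invmx (Useq R k).

Fixpoint Useq2 (p : nat) (Cs : nat -> 'M[C]_(p + p)) (k : nat) : 'M[C]_(p + p) :=
  match k with
  | 0 => 1%:M
  | k'.+1 => Useq2 Cs k' *m
      ('i *: jmx p *m sqrtpd (adjmx (Useq2 Cs k') *m Cs k' *m Useq2 Cs k'))
  end.

Definition Rseq2 (p : nat) (Cs : nat -> 'M[C]_(p + p)) (k : nat) : 'M[C]_(p + p) :=
  sqrtpd (adjmx (Useq2 Cs k) *m Cs k *m Useq2 Cs k).

Definition Wfun (p q : nat) (theta : 'M[C]_(p + p) -> C) (R : nat -> 'M[C]_(p + p))
    (X : nat -> C -> 'M[C]_(p + p, q)) (k : nat) (lam : C) : 'M[C]_(p + p, q) :=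
  let z := (1 + 'i * lam) / (1 - 'i * lam) in
  (('i - lam^-1) ^+ k / \prod_(r < k) theta (R r)) *: (Useq R k *m diagz p z *m X k z).

End Defs.

Arguments jmx {C} p.
Arguments diagz {C} p z.

(* Main.v *)
Require Import Defs.
From HB Require Import structures.
From mathcomp Require Import all_boot all_order all_algebra.
From mathcomp Require Import sesquilinear spectral.
From Stdlib Require Import ClassicalEpsilon.
From mathcomp Require Import ring.
Import Order.TTheory GRing.Theory Num.Theory Num.Def.
Import Num.Syntax.
Local Open Scope ring_scope.
Set Implicit Arguments. Unset Strict Implicit. Unset Printing Implicit Defensive.

Section S.
Variable C : numClosedFieldType.
Implicit Types n : nat.

Lemma adjmxE m n (A : 'M[C]_(m, n)) : adjmx A = (A ^t conjC)%sesqui.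
Proof. by rewrite /adjmx map_trmx. Qed.

Lemma adjmxK m n (A : 'M[C]_(m, n)) : adjmx (adjmx A) = A.
Proof. by apply/matrixP => i j; rewrite !mxE conjCK. Qed.

Lemma adjmxM m n k (A : 'M[C]_(m, n)) (B : 'M[C]_(n, k)) :
  adjmx (A *m B) = adjmx B *m adjmx A.
Proof. by rewrite /adjmx map_mxM trmx_mul. Qed.

Lemma adjmxZ m n a (A : 'M[C]_(m, n)) : adjmx (a *: A) = a^* *: adjmx A.
Proof. by apply/matrixP => i j; rewrite !mxE rmorphM. Qed.

Lemma adjmx1 n : adjmx (1%:M : 'M[C]_n) = 1%:M.
Proof. by rewrite /adjmx map_mx1 trmx1. Qed.

Lemma adjmxN m n (A : 'M[C]_(m, n)) : adjmx (- A) = - adjmx A.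
Proof. by apply/matrixP => i j; rewrite !mxE rmorphN. Qed.

Lemma adjmxD m n (A B : 'M[C]_(m, n)) : adjmx (A + B) = adjmx A + adjmx B.
Proof. by apply/matrixP => i j; rewrite !mxE rmorphD. Qed.

Lemma adjmx_unit n (A : 'M[C]_n) : (adjmx A \in unitmx) = (A \in unitmx).
Proof. by rewrite /adjmx unitmx_tr map_unitmx. Qed.

Lemma adjmx_inv n (A : 'M[C]_n) : adjmx (invmx A) = invmx (adjmx A).
Proof. by rewrite /adjmx map_invmx trmx_inv. Qed.

Lemma dot_gt0 n (v : 'rV[C]_n) : v != 0 -> 0 < (v *m adjmx v) 0 0.
Proof. move=> v0; rewrite adjmxE -dotmxE. by rewrite dnorm_gt0. Qed.


Lemma posdef1 n : posdef (1%:M : 'M[C]_n).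
Proof. split; first by rewrite adjmx1. by move=> v v0; rewrite mulmx1 dot_gt0. Qed.

Lemma posdef_congr n (A Q : 'M[C]_n) : posdef A -> Q \in unitmx ->
  posdef (Q *m A *m adjmx Q).
Proof.
move=> [hA pA] uQ; split.
  by rewrite !adjmxM adjmxK -hA mulmxA.
move=> v v0; have vQ0 : v *m Q != 0.
  apply: contra v0 => /eqP vQ; apply/eqP.
  by rewrite -[v](mulmxK uQ) vQ mul0mx.
have := pA _ vQ0; by rewrite adjmxM !mulmxA.
Qed.

Lemma posdef_diag n (A : 'M[C]_n) i : posdef A -> 0 < A i i.
Proof.
move=> [_ pA]; have : delta_mx 0 i != 0 :> 'rV[C]_n.
  apply/eqP => /matrixP /(_ 0 i); rewrite !mxE !eqxx /= => /eqP.
  by rewrite oner_eq0.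
move=> /pA; congr (0 < _).
have -> : adjmx (delta_mx 0 i : 'rV[C]_n) = delta_mx i 0.
  by apply/matrixP => k l; rewrite !mxE; case: eqP; case: eqP => /= _ _; rewrite ?rmorph1 ?rmorph0.
by rewrite -rowE -colE !mxE.
Qed.


Lemma adjmx_diag n (d : 'rV[C]_n) : (forall i, 0 <= d 0 i) -> adjmx (diag_mx d) = diag_mx d.
Proof.
move=> hd; apply/matrixP => i j; rewrite !mxE.
case: (eqVneq i j) => [->|ne]; first by rewrite !mulr1n geC0_conj.
by rewrite !mulr0n rmorph0.
Qed.

Lemma posdef_diagmx n (d : 'rV[C]_n) : (forall i, 0 < d 0 i) -> posdef (diag_mx d).
Proof.
move=> hd; pose t := \row_i sqrtC (d 0 i).
have ht : forall i, 0 < t 0 i by move=> i; rewrite mxE sqrtC_gt0.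
have -> : diag_mx d = diag_mx t *m 1%:M *m adjmx (diag_mx t).
  rewrite mulmx1 adjmx_diag => [|i]; last exact: ltW.
  by rewrite mulmx_diag; congr diag_mx; apply/rowP => i; rewrite !mxE -expr2 sqrtCK.
apply: posdef_congr; first exact: posdef1.
rewrite unitmxE det_diag unitfE; apply/prodf_neq0 => i _.
by rewrite gt_eqF ?ht.
Qed.

Lemma unitary_adj n (P : 'M[C]_n) : P \is unitarymx ->
  P *m adjmx P = 1%:M /\ adjmx P *m P = 1%:M.
Proof.
by move=> /unitarymxP; rewrite -adjmxE => h; split => //; apply: mulmx1C.
Qed.

Lemma posdef_spec n (A : 'M[C]_n) : posdef A ->
  exists P : 'M[C]_n, exists d : 'rV[C]_n,
   [/\ P *m adjmx P = 1%:M, adjmx P *m P = 1%:M, A = adjmx P *m diag_mx d *m P &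
       forall i, 0 < d 0 i].
Proof.
move=> pdA; have [hA _] := pdA.
have nA : A \is normalmx by apply/normalmxP; rewrite -adjmxE -hA.
have /orthomx_spectralP eA := nA.
have uP := spectral_unitarymx A.
have [h1 h2] := unitary_adj uP.
rewrite invmx_unitary // -adjmxE in eA.
set P := spectralmx A in eA h1 h2 uP *; set d := spectral_diag A in eA *.
exists P, d; split => // i.
have : posdef (P *m A *m adjmx P).
  apply: posdef_congr => //; exact: unitarymx_unit.
rewrite eA !mulmxA h1 mul1mx -mulmxA h1 mulmx1 => /(posdef_diag i).
by rewrite mxE eqxx mulr1n.
Qed.

Lemma sqrt_exists n (A : 'M[C]_n) : posdef A -> exists S, posdef S /\ S *m S = A.
Proof.
move=> /posdef_spec [P [d [h1 h2 eA hd]]].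
pose s := \row_i sqrtC (d 0 i).
exists (adjmx P *m diag_mx s *m adjmx (adjmx P)); split.
  apply: posdef_congr; first by apply: posdef_diagmx => i; rewrite mxE sqrtC_gt0.
  by case: (mulmx1_unit h2).
rewrite adjmxK eA !mulmxA; congr (_ *m _).
rewrite -!mulmxA; congr (_ *m _); rewrite (mulmxA P) h1 mul1mx.
by rewrite mulmx_diag; congr diag_mx; apply/rowP => i; rewrite !mxE -expr2 sqrtCK.
Qed.

Lemma diag_sum_entry n (A B : 'M[C]_n) d i :
  (A *m diag_mx d + diag_mx d *m B) i i = d 0 i * (A i i + B i i).
Proof. by rewrite mul_mx_diag mul_diag_mx !mxE mulrDr mulrC. Qed.

Lemma sqrt_unique n (S T : 'M[C]_n) : posdef S -> posdef T -> S *m S = T *m T -> S = T.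
Proof.
move=> pS pT eST; apply/eqP; rewrite -subr_eq0; apply/eqP.
set D := S - T.
have hD : D = adjmx D by rewrite /D adjmxD adjmxN -pS.1 -pT.1.
have key : S *m D + D *m T = 0.
  by rewrite /D mulmxBr mulmxBl eST addrA subrK subrr.
have nD : D \is normalmx by apply/normalmxP; rewrite -adjmxE -hD.
have /orthomx_spectralP eD := nD.
have uP := spectral_unitarymx D.
have [h1 h2] := unitary_adj uP.
rewrite invmx_unitary // -adjmxE in eD.
set P := spectralmx D in eD h1 h2 uP; set d := spectral_diag D in eD.
have uPa : adjmx P \in unitmx by case: (mulmx1_unit h2).
have pS' := posdef_congr pS (unitarymx_unit uP).
have pT' := posdef_congr pT (unitarymx_unit uP).
have : P *m (S *m D + D *m T) *m adjmx P = 0 by rewrite key mulmx0 mul0mx.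
rewrite mulmxDr mulmxDl eD.
have -> : P *m (S *m (adjmx P *m diag_mx d *m P)) *m adjmx P
   = (P *m S *m adjmx P) *m diag_mx d.
  by rewrite !mulmxA -!mulmxA h1 mulmx1.
have -> : P *m (adjmx P *m diag_mx d *m P *m T) *m adjmx P
   = diag_mx d *m (P *m T *m adjmx P).
  by rewrite !mulmxA h1 mul1mx.
move=> e.
have d0 : d = 0.
  apply/rowP => i; have /matrixP /(_ i i) := e.
  rewrite diag_sum_entry.
  have := addr_gt0 (posdef_diag i pS') (posdef_diag i pT').
  move: ((P *m S *m adjmx P) i i + (P *m T *m adjmx P) i i) => x hx.
  rewrite !mxE => /eqP; rewrite mulf_eq0 (gt_eqF hx) orbF => /eqP //.
by rewrite d0; apply/matrixP => a b; rewrite !mxE big1 // => c _; rewrite mxE big1 ?mul0r // => l _; rewrite !mxE mul0rn mulr0.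
Qed.

Lemma sqrtpd_spec n (A : 'M[C]_n) : posdef A ->
  posdef (sqrtpd A) /\ sqrtpd A *m sqrtpd A = A.
Proof.
move=> /sqrt_exists [S hS]; rewrite /sqrtpd.
exact: (epsilon_spec (inhabits 0) (fun S : 'M[C]_n => posdef S /\ S *m S = A) (ex_intro _ S hS)).
Qed.

Lemma posdef_sq n (S : 'M[C]_n) : posdef S -> S \in unitmx -> posdef (S *m S).
Proof.
move=> pS uS; have := posdef_congr (posdef1 n) uS.
by rewrite mulmx1 -pS.1.
Qed.

Lemma sqrtpd_sq n (S : 'M[C]_n) : posdef S -> S \in unitmx -> sqrtpd (S *m S) = S.
Proof.
move=> pS uS; have [h1 h2] := sqrtpd_spec (posdef_sq pS uS).
exact: sqrt_unique.
Qed.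

Variable p : nat.
Notation j := (jmx p : 'M[C]_(p + p)).

Lemma jj : j *m j = 1%:M.
Proof.
rewrite /jmx mulmx_block !mulmx0 !mul0mx !addr0 !add0r mulmx1 mulNmx mulmxN mulmx1 opprK.
by rewrite -scalar_mx_block.
Qed.

Lemma adj_j : adjmx j = j.
Proof.
rewrite /adjmx /jmx map_block_mx tr_block_mx !map_mx0 !trmx0 map_mxN map_mx1 linearN /= trmx1.
done.
Qed.

Lemma jjL m (X : 'M[C]_(m, p + p)) : X *m j *m j = X.
Proof. by rewrite -mulmxA jj mulmx1. Qed.

Lemma triL m n1 n2 n3 (X : 'M[C]_(m, n1)) (A : 'M_(n1, n2)) (B : 'M_(n2,n3)) (Y : 'M_(n1, n3)) :
  A *m B = Y -> X *m A *m B = X *m Y.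
Proof. by move=> <-; rewrite mulmxA. Qed.

Lemma triL3 m n1 n2 n3 n4 (X : 'M[C]_(m, n1)) (A : 'M_(n1, n2)) (B : 'M_(n2,n3)) (D : 'M_(n3,n4)) (Y : 'M_(n1, n4)) :
  A *m B *m D = Y -> X *m A *m B *m D = X *m Y.
Proof. by move=> <-; rewrite !mulmxA. Qed.

Definition jU (U : 'M[C]_(p + p)) := U *m j *m adjmx U = j /\ adjmx U *m j *m U = j.

Lemma conjCi' : ('i : C)^* = - 'i.
Proof. exact: conjCi. Qed.

Lemma step_jU (R : 'M[C]_(p + p)) : posdef R -> R *m j *m R = j -> jU ('i *: j *m R).
Proof.
move=> [hR _] hRj.
have ii : ('i : C) * ('i)^* = 1 by rewrite conjCi mulrN mulCii opprK.
rewrite /jU adjmxM adjmxZ adj_j -hR.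
rewrite -!scalemxAl -!scalemxAr -!scalemxAl !scalerA ii !scale1r; split.
  by rewrite !mulmxA (triL3 _ hRj) jj mul1mx.
by rewrite !mulmxA (jjL (R *m jmx p)) hRj.
Qed.

Lemma jU_mul (A B : 'M[C]_(p + p)) : jU A -> jU B -> jU (A *m B).
Proof.
move=> [a1 a2] [b1 b2]; rewrite /jU adjmxM; split.
  by rewrite !mulmxA (triL3 _ b1) a1.
by rewrite !mulmxA (triL3 _ a2) b2.
Qed.

Lemma jU1 : jU 1%:M.
Proof. by rewrite /jU adjmx1 mulmx1 mul1mx. Qed.

Lemma jU_unit U : jU U -> U \in unitmx.
Proof.
move=> [_ h]; have : j *m adjmx U *m j *m U = 1%:M.
  by rewrite -!mulmxA (mulmxA (adjmx U)) h jj.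
by case/mulmx1_unit.
Qed.

Lemma jU_adj_unit U : jU U -> adjmx U \in unitmx.
Proof. by move=> /jU_unit; rewrite adjmx_unit. Qed.

Lemma jU_inv1 U : jU U -> invmx U *m j *m invmx (adjmx U) = j.
Proof.
move=> hU; have [h1 h2] := hU.
by rewrite -{1}h1 !mulmxA (mulVmx (jU_unit hU)) mul1mx mulmxK ?jU_adj_unit.
Qed.

Lemma jU_inv2 U : jU U -> invmx (adjmx U) *m j *m invmx U = j.
Proof.
move=> hU; have [h1 h2] := hU.
by rewrite -{1}h2 !mulmxA (mulVmx (jU_adj_unit hU)) mul1mx mulmxK ?jU_unit.
Qed.


Lemma RjR_unit (R : 'M[C]_(p + p)) : R *m j *m R = j -> R \in unitmx.
Proof.
move=> h; have : j *m R *m j *m R = 1%:M by rewrite -!mulmxA (mulmxA R) h jj.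
by case/mulmx1_unit.
Qed.

Lemma Cprops U (R : 'M[C]_(p + p)) : jU U -> posdef R -> R *m j *m R = j ->
  let Cm := invmx (adjmx U) *m (R *m R) *m invmx U in
  posdef Cm /\ Cm *m j *m Cm = j.
Proof.
move=> hU pR hRj Cm; split.
  have := posdef_congr (posdef_sq pR (RjR_unit hRj)) (_ : invmx (adjmx U) \in unitmx).
  rewrite adjmx_inv adjmxK; apply; by rewrite unitmx_inv jU_adj_unit.
rewrite /Cm !mulmxA (triL3 _ (jU_inv1 hU)) (triL3 _ hRj) (triL3 _ hRj).
exact: jU_inv2.
Qed.

Definition diagz' (z : C) : 'M[C]_(p + p) := diagz p z.

Lemma diagzE (lam : C) : 1 - 'i * lam != 0 ->
  diagz p ((1 + 'i * lam) / (1 - 'i * lam)) = (1 - 'i * lam)^-1 *: (1%:M + ('i * lam) *: j).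
Proof.
move=> h; rewrite /diagz /jmx [1%:M in RHS]scalar_mx_block scale_block_mx add_block_mx scale_block_mx.
congr block_mx; apply/matrixP => x y; rewrite !mxE; case: (x == y); rewrite ?mulr1n ?mulr0n ?mulr0 ?addr0 ?oppr0 //.
all: rewrite ?mulr0 ?mulr1 //.
- by rewrite mulrC.
- by rewrite mulrN1 mulVf.
- by rewrite addr0 mulr0.
Qed.


Lemma jRjR (R : 'M[C]_(p + p)) : R *m j *m R = j -> j *m R *m j *m R = 1%:M.
Proof. by move=> h; rewrite -!mulmxA (mulmxA R) h jj. Qed.

Lemma dirac_core (R : 'M[C]_(p + p)) (lam : C) : lam != 0 -> 1 - 'i * lam != 0 ->
  R *m j *m R = j ->
  let D := diagz p ((1 + 'i * lam) / (1 - 'i * lam)) in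
  ('i - lam^-1) *: ('i *: j *m R *m D *m R *m D) - D
    = - ('i / lam) *: (j *m (R *m R) *m D).
Proof.
move=> l0 h hR D.
set a := (1 - 'i * lam)^-1; set b := 'i * lam.
have e1 : j *m R *m D *m R = a *: (j *m R *m R + b *: 1%:M).
  rewrite /D (diagzE h) -/a -/b -scalemxAr -scalemxAl mulmxDr mulmxDl mulmx1.
  by rewrite -scalemxAr -scalemxAl (jRjR hR).
have ca : ('i - lam^-1) * 'i * a = - ('i / lam).
  by rewrite /a; field; rewrite h l0.
have cab : - ('i / lam) * b = 1.
  have -> : - ('i / lam) * b = - ('i * 'i) by rewrite /b; field.
  by rewrite mulCii opprK.
rewrite -!scalemxAl (mulmxA j R R) e1 -scalemxAl scalerA mulmxDl -scalemxAl mul1mx.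
rewrite scalerA ca scalerDr scalerA cab scale1r addrK.
by [].
Qed.



Lemma jU_comm U : jU U -> j *m invmx (adjmx U) = U *m j.
Proof.
move=> hU; have [h1 _] := hU.
by rewrite -{1}h1 mulmxK // jU_adj_unit.
Qed.

Lemma dirac_step (theta : 'M[C]_(p + p) -> C) (R : nat -> 'M[C]_(p + p)) q
   (X : nat -> C -> 'M[C]_(p + p, q)) k lam :
  (forall k, posdef (R k) /\ R k *m j *m R k = j) ->
  theta (R k) != 0 ->
  (forall k z, X k.+1 z = theta (R k) *: (R k *m diagz p z *m X k z)) ->
  lam != 0 -> 1 - 'i * lam != 0 -> jU (Useq R k) ->
  Wfun theta R X k.+1 lam - Wfun theta R X k lam
   = (- ('i / lam)) *: (j *m Cseq R k *m Wfun theta R X k lam).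
Proof.
move=> hR th0 hX l0 h hU.
rewrite /Wfun /= hX /Cseq.
set z := (1 + 'i * lam) / (1 - 'i * lam); set D := diagz p z.
set U := Useq R k; set c := ('i - lam^-1) ^+ k / \prod_(r < k) theta (R r).
have coef : ('i - lam^-1) ^+ k.+1 / \prod_(r < k.+1) theta (R r)
    = c * ('i - lam^-1) / theta (R k).
  by rewrite exprSr big_ord_recr /= invfM /c; set P := \prod_(i < k) _; set a := _ - _; set t := theta _; rewrite !mulrA (mulrAC _ a).
rewrite coef.
have -> : (c * ('i - lam^-1) / theta (R k)) *: (U *m ('i *: jmx p *m R k) *m D *m
        (theta (R k) *: (R k *m D *m X k z))) - c *: (U *m D *m X k z)
   = c *: (U *m (('i - lam^-1) *: ('i *: j *m R k *m D *m R k *m D) - D) *m X k z).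
  rewrite -!scalemxAr scalerA divfK // mulmxBr mulmxBl scalerBr -!scalemxAr -!scalemxAl.
  by rewrite !(=^~ scalemxAr, =^~ scalemxAl) !scalerA !mulmxA mulrA.
rewrite (dirac_core l0 h (hR k).2) -/z -/D.
rewrite -!scalemxAr -!scalemxAl !mulmxA (jU_comm hU).
rewrite -[U *m j *m R k *m R k *m invmx U *m U]mulmxA.
by rewrite (mulVmx (jU_unit hU)) mulmx1 !scalerA mulrC.
Qed.

Lemma Useq_jU (R : nat -> 'M[C]_(p + p)) :
  (forall k, posdef (R k) /\ R k *m j *m R k = j) -> forall k, jU (Useq R k).
Proof.
move=> hR; elim=> [|k IH] /=; first exact: jU1.
by apply: jU_mul IH (step_jU (hR k).1 (hR k).2).
Qed.

Lemma j_unit : j \in unitmx.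
Proof. by case: (mulmx1_unit jj). Qed.

Lemma sqrt_jR (R : 'M[C]_(p + p)) : posdef R -> (R *m R) *m j *m (R *m R) = j ->
  R *m j *m R = j.
Proof.
move=> pR h.
have uR : R \in unitmx by move: (RjR_unit h); rewrite unitmx_mul => /andP [].
have piR : posdef (invmx R).
  have := posdef_congr pR (_ : invmx R \in unitmx).
  rewrite adjmx_inv -pR.1 (mulVmx uR) mul1mx; apply; by rewrite unitmx_inv.
have pS : posdef (j *m invmx R *m j).
  by have := posdef_congr piR j_unit; rewrite adj_j.
have e : R *m R = j *m invmx R *m j *m (j *m invmx R *m j).
  have e0 : R *m R *m j *m R *m R *m invmx R *m invmx R *m j
          = j *m invmx R *m invmx R *m j.
    by rewrite -(mulmxA (R *m R *m j) R R) h.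
  rewrite (mulmxK uR) (mulmxK uR) (jjL (R *m R)) in e0.
  by rewrite e0 !mulmxA (jjL (j *m invmx R)).
rewrite {2}(sqrt_unique pR pS e).
by rewrite !mulmxA (jjL R) (mulmxV uR) mul1mx.
Qed.


Lemma UCU U (M : 'M[C]_(p + p)) : jU U ->
  adjmx U *m (invmx (adjmx U) *m M *m invmx U) *m U = M.
Proof.
move=> hU; rewrite !mulmxA (mulmxV (jU_adj_unit hU)) mul1mx mulmxKV //.
exact: jU_unit.
Qed.

Lemma A_props U (Cm : 'M[C]_(p + p)) : jU U -> posdef Cm -> Cm *m j *m Cm = j ->
  posdef (adjmx U *m Cm *m U) /\
  (adjmx U *m Cm *m U) *m j *m (adjmx U *m Cm *m U) = j.
Proof.
move=> hU pC hC; split.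
  by have := posdef_congr pC (jU_adj_unit hU); rewrite adjmxK.
by rewrite !mulmxA (triL3 _ hU.1) (triL3 _ hC) hU.2.
Qed.

Lemma step2 U (Cm : 'M[C]_(p + p)) : jU U -> posdef Cm -> Cm *m j *m Cm = j ->
  let R := sqrtpd (adjmx U *m Cm *m U) in
  [/\ posdef R, R *m j *m R = j & Cm = invmx (adjmx U) *m (R *m R) *m invmx U].
Proof.
move=> hU pC hC R; have [pA hA] := A_props hU pC hC.
have [pR eR] := sqrtpd_spec pA.
split => //.
  by apply: sqrt_jR => //; rewrite eR.
rewrite eR !mulmxA (mulVmx (jU_adj_unit hU)) mul1mx mulmxK //; exact: jU_unit.
Qed.

Lemma Useq2_jU (Cs : nat -> 'M[C]_(p + p)) :
  (forall k, posdef (Cs k) /\ Cs k *m j *m Cs k = j) -> forall k, jU (Useq2 Cs k).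
Proof.
move=> hC; elim=> [|k IH] /=; first exact: jU1.
have [pR hR _] := step2 IH (hC k).1 (hC k).2.
exact: jU_mul IH (step_jU pR hR).
Qed.

End S.
Theorem proposition2p1 (C : numClosedFieldType) (p : nat) (hp : (0 < p)%N)
    (theta : 'M[C]_(p + p) -> C)
    (htheta : forall R : 'M[C]_(p + p),
        posdef R -> R *m jmx p *m R = jmx p -> theta R != 0) :
  (* (i) *)
  (forall R : nat -> 'M[C]_(p + p),
     (forall k, posdef (R k) /\ R k *m jmx p *m R k = jmx p) ->
     (forall k, posdef (Cseq R k) /\ Cseq R k *m jmx p *m Cseq R k = jmx p) /\
     (forall (q : nat) (X : nat -> C -> 'M[C]_(p + p, q)),
        (forall k z, X k.+1 z = theta (R k) *: (R k *m diagz p z *m X k z)) ->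
        forall k (lam : C), lam != 0 -> 1 - 'i * lam != 0 ->
          Wfun theta R X k.+1 lam - Wfun theta R X k lam
          = (- ('i / lam)) *: (jmx p *m Cseq R k *m Wfun theta R X k lam))) /\
  (* (ii) *)
  (forall Cs : nat -> 'M[C]_(p + p),
     (forall k, posdef (Cs k) /\ Cs k *m jmx p *m Cs k = jmx p) ->
     forall k, posdef (Rseq2 Cs k) /\ Rseq2 Cs k *m jmx p *m Rseq2 Cs k = jmx p /\
       Cs k = invmx (adjmx (Useq2 Cs k)) *m (Rseq2 Cs k *m Rseq2 Cs k)
              *m invmx (Useq2 Cs k)) /\
  (* the two maps are mutually inverse *)
  (forall R : nat -> 'M[C]_(p + p),
     (forall k, posdef (R k) /\ R k *m jmx p *m R k = jmx p) ->
     forall k, Rseq2 (Cseq R) k = R k) /\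
  (forall Cs : nat -> 'M[C]_(p + p),
     (forall k, posdef (Cs k) /\ Cs k *m jmx p *m Cs k = jmx p) ->
     forall k, Cseq (Rseq2 Cs) k = Cs k).
Proof.
have ii : forall (R : nat -> 'M[C]_(p + p)),
     (forall k, posdef (R k) /\ R k *m jmx p *m R k = jmx p) ->
     forall k, Useq2 (Cseq R) k = Useq R k.
  move=> R hR; elim=> //= k IH.
  rewrite IH /Cseq UCU; last exact: Useq_jU.
  congr (_ *m (_ *m _)); apply: sqrtpd_sq; first exact: (hR k).1.
  exact: RjR_unit (hR k).2.
split.
  move=> R hR; split.
    move=> k; exact: Cprops (Useq_jU hR k) (hR k).1 (hR k).2.
  move=> q X hX k lam l0 h; apply: dirac_step => //.
    exact: htheta (hR k).1 (hR k).2.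
  exact: Useq_jU.
split.
  move=> Cs hC k; have hU := Useq2_jU hC k.
  by have [pR hR e] := step2 hU (hC k).1 (hC k).2.
split.
  move=> R hR k; rewrite /Rseq2 ii // /Cseq UCU; last exact: Useq_jU.
  apply: sqrtpd_sq; first exact: (hR k).1.
  exact: RjR_unit (hR k).2.
move=> Cs hC k.
have eU : forall k, Useq (Rseq2 Cs) k = Useq2 Cs k by elim => //= k' ->.
rewrite /Cseq eU; have hU := Useq2_jU hC k.
by have [pR hR e] := step2 hU (hC k).1 (hC k).2.
Qed.
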